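(* Fix a positive integer $n$ and two partitions $\Lambda_w$ and $\Lambda_b$ of $n$. Then $$\sum_{T\in\mathbf{W}_{\Lambda_w,\Lambda_b}}\omega(T)-\sum_{T\in\mathbf{B}_{\Lambda_w,\Lambda_b}}\omega(T)=0.$$
   Context: A black and white tree is a finite tree embedded in $\mathbb{C}$ whose vertices are colored black and white so that adjacent vertices have different colors. It is real if it is invariant (including colors) under complex conjugation. Two real trees are isomorphic if one is carried to the other by a homeomorphism of $\mathbb{C}$ commuting with complex conjugation and preserving the orientation of the real axis (and the colors); trees are considered up to isomorphism. The real vertices of a real tree $T$ are its vertices on $\mathbb{R}$; the real part sequence of $T$ is the sequence of (color, degree) of the real vertices from left to right; the first and last real vertices are the border vertices. The weight $\omega(T)$: if the real part sequence is not symmetric (not a palindrome), $\omega(T)=0$; if $T$ has only one real vertex, $\omega(T)=1$; if the real part sequence is symmetric, $T$ has more than one real vertex and the middle real vertex has the same color as the border vertices, $\omega(T)=-1$; if it is symmetric, with more than one real vertex, and the middle real vertex has a different color from the border vertices, $\omega(T)=1$. $T$ is white side (resp. black side) if its rightmost real vertex is white (resp. black). $\mathbf{W}_{\Lambda_w,\Lambda_b}$ (resp. $\mathbf{B}_{\Lambda_w,\Lambda_b}$) is the set of isomorphism classes of white side (resp. black side) real trees with white vertex degrees $\Lambda_w$ and black vertex degrees $\Lambda_b$. *)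

(* Defs.v *)
From mathcomp Require Import all_boot all_order all_algebra.
From Stdlib Require List.
Set Implicit Arguments. Unset Strict Implicit. Unset Printing Implicit Defensive.
Import GRing.Theory Num.Theory.

Definition white : bool := true.
Definition black : bool := false.

(* A planted plane tree lying in the open upper half-plane: a node together
   with the (counterclockwise ordered) list of subtrees hanging from it. *)
Inductive ptree := PNode of seq ptree.

(* A real tree up to isomorphism: the colour of the leftmost real vertex, and
   for each real vertex (left to right, there is at least one) the ordered
   list of planted plane trees attached to it in the upper half-plane
   (ordered counterclockwise, from the positive real direction).  The lower
   half-plane part is the complex conjugate. *)
Record rtree := RTree {
  rt_col : bool;
  rt_first : seq ptree;
  rt_rest : seq (seq ptree)
}.

Definition rforests (T : rtree) : seq (seq ptree) := rt_first T :: rt_rest T.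
Definition rsize (T : rtree) : nat := size (rforests T).
Definition rforest (T : rtree) (i : nat) : seq ptree := nth [::] (rforests T) i.
Definition rcol (T : rtree) (i : nat) : bool := rt_col T (+) odd i.
(* degree of the i-th real vertex: real neighbours + upper and lower edges *)
Definition rdeg (T : rtree) (i : nat) : nat :=
  (0 < i) + (i < (rsize T).-1) + 2 * size (rforest T i).

(* (colour, degree) of the vertices of a planted tree whose root has colour col;
   the root's degree counts the edge to its parent. *)
Fixpoint pdegs (col : bool) (t : ptree) : seq (bool * nat) :=
  let: PNode ch := t in
  (col, (size ch).+1) :: flatten [seq pdegs (~~ col) c | c <- ch].

Definition real_part_seq (T : rtree) : seq (bool * nat) :=
  [seq (rcol T i, rdeg T i) | i <- iota 0 (rsize T)].

Definition upper_vertices (T : rtree) : seq (bool * nat) :=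
  flatten [seq flatten [seq pdegs (~~ rcol T i) t | t <- rforest T i]
          | i <- iota 0 (rsize T)].

(* all vertices: real ones, upper ones, and their complex conjugates *)
Definition all_vertices (T : rtree) : seq (bool * nat) :=
  real_part_seq T ++ upper_vertices T ++ upper_vertices T.

Definition white_degrees (T : rtree) : seq nat :=
  [seq p.2 | p <- all_vertices T & p.1 == white].
Definition black_degrees (T : rtree) : seq nat :=
  [seq p.2 | p <- all_vertices T & p.1 == black].

Definition white_side (T : rtree) : bool := rcol T (rsize T).-1 == white.
Definition black_side (T : rtree) : bool := rcol T (rsize T).-1 == black.

Definition omega (T : rtree) : int :=
  let s := real_part_seq T in
  if s != rev s then 0%R
  else if size s == 1 then 1%R
  else if (nth (white, 0) s (size s)./2).1 == (nth (white, 0) s 0).1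
       then (-1)%R else 1%R.

Definition is_partition (n : nat) (l : seq nat) : bool :=
  [&& all (fun x => 0 < x) l, sorted geq l & sumn l == n].

Definition in_W (Lw Lb : seq nat) (T : rtree) : Prop :=
  [/\ white_side T, perm_eq (white_degrees T) Lw & perm_eq (black_degrees T) Lb].
Definition in_B (Lw Lb : seq nat) (T : rtree) : Prop :=
  [/\ black_side T, perm_eq (white_degrees T) Lw & perm_eq (black_degrees T) Lb].

(* Main.v *)
Require Import Defs.
From mathcomp Require Import all_boot all_order all_algebra.
From Stdlib Require List.
Import GRing.Theory Num.Theory.
From Stdlib Require Permutation.
From mathcomp Require Import zify.

Definition pf (c : bool) (F : seq ptree) := flatten [seq pdegs c t | t <- F].

Lemma count_flatten_map (T : Type) (x : bool * nat) (h : T -> seq (bool * nat)) (s : seq T) :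
  count_mem x (flatten (map h s)) = \sum_(i <- s) count_mem x (h i).
Proof. elim: s => [|a s IH]; first by rewrite big_nil. by rewrite /= count_cat IH big_cons. Qed.

Lemma count_map_sum (T : Type) (x : bool * nat) (g : T -> bool * nat) (s : seq T) :
  count_mem x (map g s) = \sum_(i <- s) (g i == x).
Proof. elim: s => [|a s IH]; first by rewrite big_nil. by rewrite /= IH big_cons. Qed.

Definition cv (T : rtree) (x : bool * nat) (i : nat) : nat :=
  ((rcol T i, rdeg T i) == x) + 2 * count_mem x (pf (~~ rcol T i) (rforest T i)).

Lemma count_av T x : count_mem x (all_vertices T) = \sum_(0 <= i < rsize T) cv T x i.
Proof.
have HU : count_mem x (upper_vertices T) = \sum_(i <- iota 0 (rsize T)) count_mem x (pf (~~ rcol T i) (rforest T i)).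
  exact: (count_flatten_map nat x (fun i => pf (~~ rcol T i) (rforest T i)) (iota 0 (rsize T))).
rewrite /all_vertices count_cat count_cat HU /real_part_seq count_map_sum.
rewrite /index_iota subn0 /cv -!big_split. apply: eq_bigr => i _. by rewrite mul2n -addnn.
Qed.

Fixpoint encR (h : seq (seq ptree * seq ptree)) : ptree :=
  match h with
  | [::] => PNode [::]
  | p :: rest => if rest is [::] then PNode (p.1 ++ p.2) else PNode (encR rest :: p.1 ++ p.2)
  end.

Fixpoint decR (t : ptree) : seq (seq ptree * seq ptree) :=
  let: PNode ch := t in
  if odd (size ch) then
    (if ch is Q :: rest then (take (size rest)./2 rest, drop (size rest)./2 rest) :: decR Q else [::])
  else [:: (take (size ch)./2 ch, drop (size ch)./2 ch)].

Definition balanced (h : seq (seq ptree * seq ptree)) := all (fun p => size p.1 == size p.2) h.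

Lemma half_even_take (l : seq ptree) : ~~ odd (size l) ->
  size (take (size l)./2 l) = size (drop (size l)./2 l).
Proof.
move=> Hev. have e := odd_double_half (size l). rewrite (negbTE Hev) add0n in e.
rewrite size_drop size_takel; last by rewrite -{2}e -addnn leq_addr.
by rewrite -{2}e -addnn addnK.
Qed.

Lemma decR_encR h : 0 < size h -> balanced h -> decR (encR h) = h.
Proof.
elim: h => [|[L R] rest IH] // _ /= /andP [/eqP Hs Hb].
case: rest IH Hb => [|q rest'] IH Hb.
  by rewrite /= size_cat -Hs addnn odd_double half_double take_size_cat // drop_size_cat.
rewrite /= size_cat -Hs addnn odd_double /= half_double take_size_cat // drop_size_cat //.
by rewrite IH.
Qed.

Lemma decR_spec : forall t, [/\ encR (decR t) = t, 0 < size (decR t) & balanced (decR t)].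
Proof.
fix IH 1. case=> ch /=. case: ifP => Hodd.
  case: ch Hodd => [|Q rest] Hodd //=.
  case: (IH Q) => e ne b.
  have Hev : ~~ odd (size rest) by move: Hodd => /=; case: (odd (size rest)).
  split => //.
  - case E: (decR Q) ne => [|q r] // _. by rewrite -E e cat_take_drop.
  - by rewrite /= half_even_take // eqxx b.
split => //.
- by rewrite /= cat_take_drop.
- by rewrite /= half_even_take ?Hodd // eqxx.
Qed.

Definition d0 : seq ptree * seq ptree := ([::], [::]).
Definition mkFs (Fmid : seq ptree) (h : seq (seq ptree * seq ptree)) :=
  rev (map fst h) ++ Fmid :: map snd h.
Definition mkT (cm : bool) Fmid h :=
  RTree (cm (+) odd (size h)) (head [::] (mkFs Fmid h)) (behead (mkFs Fmid h)).

Section MK.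
Variables (cm : bool) (Fmid : seq ptree) (h : seq (seq ptree * seq ptree)).

Lemma rforests_mk : rforests (mkT cm Fmid h) = mkFs Fmid h.
Proof. rewrite /rforests /mkT /mkFs /=. by case: (rev _). Qed.

Lemma rsize_mk : rsize (mkT cm Fmid h) = (size h + size h).+1.
Proof. by rewrite /rsize rforests_mk /mkFs size_cat /= size_rev !size_map addnS. Qed.

Lemma rforest_mk_l j : j < size h -> rforest (mkT cm Fmid h) (size h - j.+1) = (nth d0 h j).1.
Proof.
move=> Hj. rewrite /rforest rforests_mk /mkFs nth_cat size_rev size_map.
rewrite (_ : size h - j.+1 < size h = true); last by lia.
rewrite nth_rev size_map; last by lia.
rewrite (_ : size h - (size h - j.+1).+1 = j); last by lia.
by rewrite (nth_map d0).
Qed.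

Lemma rforest_mk_m : rforest (mkT cm Fmid h) (size h) = Fmid.
Proof. by rewrite /rforest rforests_mk /mkFs nth_cat size_rev size_map ltnn subnn. Qed.

Lemma rforest_mk_r j : j < size h -> rforest (mkT cm Fmid h) (size h + j.+1) = (nth d0 h j).2.
Proof.
move=> Hj. rewrite /rforest rforests_mk /mkFs nth_cat size_rev size_map.
rewrite (_ : size h + j.+1 < size h = false); last by lia.
rewrite (_ : size h + j.+1 - size h = j.+1); last by lia.
by rewrite /= (nth_map d0).
Qed.

Lemma rcol_mk_l j : j < size h -> rcol (mkT cm Fmid h) (size h - j.+1) = ~~ cm (+) odd j.
Proof.
move=> Hj. rewrite /rcol /= oddB //=.
by case: cm; case: (odd (size h)); case: (odd j).
Qed.

Lemma rcol_mk_r j : rcol (mkT cm Fmid h) (size h + j.+1) = ~~ cm (+) odd j.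
Proof. rewrite /rcol /= oddD /=. by case: cm; case: (odd (size h)); case: (odd j). Qed.

Lemma rcol_mk_m : rcol (mkT cm Fmid h) (size h) = cm.
Proof. by rewrite /rcol /= addbK. Qed.

Lemma rdeg_mk_l j : j < size h ->
  rdeg (mkT cm Fmid h) (size h - j.+1) = (j.+1 < size h) + 1 + 2 * size (nth d0 h j).1.
Proof.
move=> Hj. rewrite /rdeg rsize_mk /= rforest_mk_l // subn_gt0.
by rewrite (_ : size h - j.+1 < size h + size h = true); last by lia.
Qed.

Lemma rdeg_mk_r j : j < size h ->
  rdeg (mkT cm Fmid h) (size h + j.+1) = (j.+1 < size h) + 1 + 2 * size (nth d0 h j).2.
Proof.
move=> Hj. rewrite /rdeg rsize_mk /= rforest_mk_r // ltn_add2l.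
rewrite (_ : 0 < size h + j.+1 = true); last by lia.
by rewrite [1 + _]addnC.
Qed.

Lemma rdeg_mk_m : 0 < size h -> rdeg (mkT cm Fmid h) (size h) = 2 + 2 * size Fmid.
Proof.
move=> Hh. rewrite /rdeg rsize_mk /= rforest_mk_m Hh.
by rewrite (_ : size h < size h + size h = true); last by lia.
Qed.

End MK.

Definition pal T := real_part_seq T == rev (real_part_seq T).

Lemma size_rps T : size (real_part_seq T) = rsize T.
Proof. by rewrite size_map size_iota. Qed.

Lemma nth_rps T i : i < rsize T -> nth (white, 0) (real_part_seq T) i = (rcol T i, rdeg T i).
Proof. move=> Hi. by rewrite (nth_map 0) ?size_iota // nth_iota. Qed.

Lemma palP T : reflect (forall i, i < rsize T ->
   (rcol T i, rdeg T i) = (rcol T (rsize T - i.+1), rdeg T (rsize T - i.+1))) (pal T).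
Proof.
apply: (iffP eqP) => [E i Hi | H].
  rewrite -nth_rps // E nth_rev size_rps // nth_rps //. lia.
apply: (eq_from_nth (x0 := (white,0))); first by rewrite size_rev.
move=> i; rewrite size_rps => Hi. rewrite nth_rev size_rps // !nth_rps //; [exact: H | lia].
Qed.

Lemma pal_mk cm Fmid h : pal (mkT cm Fmid h) = balanced h.
Proof.
apply/palP/(all_nthP d0) => [H j Hj | H i].
  have := H (size h - j.+1). rewrite rsize_mk.
  rewrite (_ : (size h + size h).+1 - (size h - j.+1).+1 = size h + j.+1); last by lia.
  rewrite rdeg_mk_l // rdeg_mk_r //. move=> /(_ ltac:(lia)) [_ E]. apply/eqP; lia.
rewrite rsize_mk => Hi.
case: (ltngtP i (size h)) => Him.
- have [j Hj ->] : exists2 j, j < size h & i = size h - j.+1 by exists (size h - i.+1); lia.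
  rewrite (_ : (size h + size h).+1 - (size h - j.+1).+1 = size h + j.+1); last by lia.
  by rewrite rcol_mk_l // rcol_mk_r // rdeg_mk_l // rdeg_mk_r // (eqP (H j Hj)).
- have [j Hj ->] : exists2 j, j < size h & i = size h + j.+1 by exists (i - (size h).+1); lia.
  rewrite (_ : (size h + size h).+1 - (size h + j.+1).+1 = size h - j.+1); last by lia.
  by rewrite rcol_mk_l // rcol_mk_r // rdeg_mk_l // rdeg_mk_r // (eqP (H j Hj)).
- rewrite Him. by rewrite (_ : (size h + size h).+1 - (size h).+1 = size h); last by lia.
Qed.

Arguments encR : simpl never.
Lemma encR1 p : encR [:: p] = PNode (p.1 ++ p.2). Proof. by []. Qed.
Lemma encRS p q r : encR [:: p, q & r] = PNode (encR (q :: r) :: p.1 ++ p.2). Proof. by []. Qed.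

Definition W (c : bool) (h : seq (seq ptree * seq ptree)) (x : bool * nat) (j : nat) : nat :=
  ((c (+) odd j, (j.+1 < size h) + (size (nth d0 h j).1 + size (nth d0 h j).2).+1) == x)
  + count_mem x (pf (~~ (c (+) odd j)) (nth d0 h j).1)
  + count_mem x (pf (~~ (c (+) odd j)) (nth d0 h j).2).

Lemma count_enc h : forall c x, 0 < size h ->
  count_mem x (pdegs c (encR h)) = \sum_(0 <= j < size h) W c h x j.
Proof.
elim: h => [|p rest IH] c x // _.
case: rest IH => [|q rest'] IH.
  rewrite encR1 big_nat1 /W /= map_cat flatten_cat count_cat size_cat addbF.
  rewrite -/(pf (~~ c) p.1) -/(pf (~~ c) p.2). by rewrite add0n addnA.
rewrite encRS big_nat_recl //.
rewrite (eq_bigr (fun j => W (~~ c) (q :: rest') x j)); last first.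
  move=> j _. by rewrite /W /= addbN -addNb.
rewrite -IH //= map_cat flatten_cat !count_cat size_cat.
by rewrite /W /= addbF add1n [count_mem x (pdegs _ _) + _]addnC !addnA.
Qed.

Lemma sum_shift (F : nat -> nat) a n :
  \sum_(a <= i < a + n) F i = \sum_(0 <= j < n) F (a + j).
Proof.
elim: n => [|n IH]; first by rewrite addn0 !big_geq.
rewrite addnS !big_nat_recr //=; last by lia.
by rewrite IH.
Qed.

Lemma sum_rev (F : nat -> nat) n :
  \sum_(0 <= i < n) F i = \sum_(0 <= j < n) F (n - j.+1).
Proof. by rewrite big_nat_rev. Qed.

Lemma cv_pair cm Fmid h x j : j < size h -> balanced h ->
  cv (mkT cm Fmid h) x (size h - j.+1) + cv (mkT cm Fmid h) x (size h + j.+1)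
  = W (~~ cm) h x j + W (~~ cm) h x j.
Proof.
move=> Hj Hb.
have /eqP Hs := all_nthP d0 Hb j Hj.
rewrite /cv rcol_mk_l // rcol_mk_r // rdeg_mk_l // rdeg_mk_r // rforest_mk_l // rforest_mk_r // /W.
rewrite -Hs.
rewrite (_ : (j.+1 < size h) + (size (nth d0 h j).1 + size (nth d0 h j).1).+1
           = (j.+1 < size h) + 1 + 2 * size (nth d0 h j).1); last by lia.
set a := (_ == x). set b := count_mem x _. set c := count_mem x _.
rewrite !mul2n -!addnn. lia.
Qed.

Lemma av_perm cm Fmid h : 0 < size h -> balanced h ->
  perm_eq (all_vertices (RTree cm (encR h :: Fmid) [::])) (all_vertices (mkT cm Fmid h)).
Proof.
move=> Hh Hb. rewrite /perm_eq; apply/allP => x _; apply/eqP.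
rewrite !count_av rsize_mk.
rewrite (_ : (size h + size h).+1 = size h + (size h).+1); last by lia.
rewrite big_nat1 (@big_cat_nat _ _ _ (size h)) //=; last by lia.
rewrite -addSnnS (@big_cat_nat _ _ _ (size h).+1 (size h)) //=; last by lia.
rewrite big_nat1 sum_shift sum_rev.
rewrite addnCA -big_split /=.
have -> : \sum_(0 <= j < size h) (cv (mkT cm Fmid h) x (size h - j.+1) + cv (mkT cm Fmid h) x ((size h).+1 + j))
   = \sum_(0 <= j < size h) (W (~~ cm) h x j + W (~~ cm) h x j).
  apply: eq_big_nat => j /andP [_ Hj]. by rewrite addSnnS cv_pair.
rewrite big_split /= addnn -mul2n.
have pfc : forall c a F, pf c (a :: F) = pdegs c a ++ pf c F by [].
have -> : cv (RTree cm (encR h :: Fmid) [::]) x 0 =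
   ((cm, 2 + 2 * size Fmid) == x) + 2 * (\sum_(0 <= j < size h) W (~~ cm) h x j + count_mem x (pf (~~cm) Fmid)).
  rewrite /cv /rforest /= pfc count_cat count_enc //.
  by rewrite /rcol /rdeg /= addbF mulnS.
rewrite /cv rcol_mk_m rdeg_mk_m // rforest_mk_m.
rewrite mulnDr. lia.
Qed.


Definition hm T := (rsize T)./2.
Definition hc T := rcol T (hm T).
Definition hF T := rforest T (hm T).
Definition hh T := zip (rev (take (hm T) (rforests T))) (drop (hm T).+1 (rforests T)).
Definition phi T := RTree (hc T) (encR (hh T) :: hF T) [::].
Definition psi T := mkT (rt_col T) (behead (rt_first T)) (decR (head (PNode [::]) (rt_first T))).

Lemma rsize_hm T : odd (rsize T) -> rsize T = (hm T + hm T).+1.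
Proof. move=> Ho. have := odd_double_half (rsize T). rewrite Ho -addnn /hm. lia. Qed.

Lemma size_hh T : odd (rsize T) -> size (hh T) = hm T.
Proof.
move=> Ho. have E := rsize_hm T Ho. move: E; rewrite /hh /rsize => E.
rewrite size_zip size_rev size_drop size_takel E; lia.
Qed.

Lemma mk_half T : odd (rsize T) -> mkT (hc T) (hF T) (hh T) = T.
Proof.
move=> Ho. have E := rsize_hm T Ho. have Hs := size_hh T Ho.
move: E Hs; rewrite /hh /rsize => E Hs.
have Ht : size (take (hm T) (rforests T)) = hm T by rewrite size_takel // E; lia.
have Hd : size (drop (hm T).+1 (rforests T)) = hm T by rewrite size_drop E; lia.
have Z1 : [seq i.1 | i <- zip (rev (take (hm T) (rforests T))) (drop (hm T).+1 (rforests T))]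
    = rev (take (hm T) (rforests T)) by apply: unzip1_zip; rewrite size_rev Ht Hd.
have Z2 : [seq i.2 | i <- zip (rev (take (hm T) (rforests T))) (drop (hm T).+1 (rforests T))]
    = drop (hm T).+1 (rforests T) by apply: unzip2_zip; rewrite size_rev Ht Hd.
rewrite /mkT /mkFs /hh Hs Z1 Z2.
rewrite revK /hF /rforest -drop_nth ?cat_take_drop; last by rewrite E; lia.
rewrite /hc /rcol addbK. by case: T {E Hs Ht Hd Ho Z1 Z2}.
Qed.

Lemma hm_mk cm Fmid h : hm (mkT cm Fmid h) = size h.
Proof. rewrite /hm rsize_mk addnn. exact: (half_bit_double _ true). Qed.

Lemma phi_mk cm Fmid h : phi (mkT cm Fmid h) = RTree cm (encR h :: Fmid) [::].
Proof.
rewrite /phi /hc /hF /hh hm_mk rcol_mk_m rforest_mk_m rforests_mk /mkFs.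
rewrite take_size_cat ?size_rev ?size_map // -cat_rcons drop_size_cat ?size_rcons ?size_rev ?size_map //.
by rewrite revK zip_unzip.
Qed.

Definition Ap T := pal T && (rsize T == 1).
Definition Cp T := pal T && (rsize T != 1).
Definition sgt (T : rtree) : int := if hc T then 1%R else (-1)%R.

Lemma pal_odd T : pal T -> odd (rsize T).
Proof.
move/palP => H. have [Hc _] := H 0 (ltn0Sn _).
move: Hc; rewrite /rcol /rsize /rforests /= subn1 /=.
by case: (rt_col T); case: (odd (size (rt_rest T))).
Qed.

Lemma C_form T : Cp T -> [/\ T = mkT (hc T) (hF T) (hh T), 0 < size (hh T) & balanced (hh T)].
Proof.
case/andP => Hp H1. have Ho := pal_odd T Hp. have E := mk_half T Ho.
split; first by rewrite E.
- rewrite size_hh //. have := rsize_hm T Ho. move: H1 => /eqP. lia.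
- by rewrite -(pal_mk (hc T) (hF T)) E.
Qed.

Lemma Cp_mk cm Fmid h : 0 < size h -> balanced h -> Cp (mkT cm Fmid h).
Proof. move=> Hs Hb. rewrite /Cp pal_mk Hb rsize_mk /=. apply/eqP. lia. Qed.

Lemma Ap_single c F : Ap (RTree c F [::]).
Proof.
rewrite /Ap /pal andbT.
have -> : rev (real_part_seq (RTree c F [::])) = real_part_seq (RTree c F [::]) by [].
by rewrite eqxx.
Qed.

Lemma sig_phi cm Fmid h : sgt (RTree cm (encR h :: Fmid) [::]) = sgt (mkT cm Fmid h).
Proof. by rewrite /sgt /hc hm_mk rcol_mk_m /hm /rcol /= addbF. Qed.

Lemma sum_perm (F : rtree -> int) s t : Permutation.Permutation s t ->
  (\sum_(x <- s) F x = \sum_(x <- t) F x)%R.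
Proof.
elim => [|x l l' _ IH|x y l|l l' l'' _ IH1 _ IH2].
- by [].
- by rewrite !big_cons IH.
- by rewrite !big_cons addrCA.
- by rewrite IH1 IH2.
Qed.

Lemma sum_eq_in (F G : rtree -> int) s : (forall x, List.In x s -> F x = G x) ->
  (\sum_(x <- s) F x = \sum_(x <- s) G x)%R.
Proof.
elim: s => [|a s IH] H; first by rewrite !big_nil.
rewrite !big_cons H /=; last by left.
by rewrite IH // => x Hx; apply: H; right.
Qed.

Lemma In_filter (a : pred rtree) x s : List.In x (filter a s) <-> List.In x s /\ a x.
Proof.
elim: s => [|b s IH] /=; first by split; [by [] | by case].
case Hb: (a b) => /=; rewrite IH; split.
- case=> [<-|[H1 H2]]; [split; [left|] | split; [right|]] => //.
- case=> [[<-|H1] H2]; [left | right] => //.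
- case=> H1 H2; split; [right|] => //.
- case=> [[<-|H1] H2]; [by rewrite Hb in H2 | by split].
Qed.

Lemma NoDup_filter (a : pred rtree) s : List.NoDup s -> List.NoDup (filter a s).
Proof.
elim: s => [|b s IH] //= H. inversion H; subst.
case: (a b); last exact: IH.
constructor; last exact: IH.
by move/In_filter => [].
Qed.

Arguments rsize : simpl never.
Arguments real_part_seq : simpl never.
Definition fT T : int := if white_side T then omega T else (- omega T)%R.

Lemma f_split T : fT T = ((if Ap T then sgt T else 0) - (if Cp T then sgt T else 0))%R.
Proof.
rewrite /fT /omega size_rps /Ap /Cp.
have [Hp|Hp] := boolP (pal T); last first.
  have Hp' := Hp. rewrite /pal in Hp'. rewrite Hp' !andFb.
  by case: (white_side T); rewrite ?subr0 ?oppr0.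
have Hp' := Hp. rewrite /pal in Hp'. rewrite Hp' !andTb.
case H1: (rsize T == 1).
  rewrite /white_side /sgt /hc /hm (eqP H1).
  by case: (rcol T 0); rewrite ?subr0.
have Hk : 0 < rsize T by [].
rewrite !nth_rps //; last by lia.
have /palP H := Hp. have [Hc _] := H 0 Hk.
rewrite /white_side /sgt /hc /hm subn1 in Hc *. rewrite -Hc.
by case: (rcol T 0); case: (rcol T (rsize T)./2); rewrite ?sub0r ?opprK.
Qed.


Definition okd (Lw Lb : seq nat) T := perm_eq (white_degrees T) Lw && perm_eq (black_degrees T) Lb.

Lemma okd_perm Lw Lb T1 T2 : perm_eq (all_vertices T1) (all_vertices T2) -> okd Lw Lb T1 = okd Lw Lb T2.
Proof.
move=> H. rewrite /okd /white_degrees /black_degrees.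
have Hw := perm_map (fun p : bool * nat => p.2) (perm_filter (fun p : bool * nat => p.1 == white) H).
have Hb := perm_map (fun p : bool * nat => p.2) (perm_filter (fun p : bool * nat => p.1 == black) H).
by rewrite (permPl Hw) (permPl Hb).
Qed.

Lemma okd_nonempty Lw Lb c : all (fun x => 0 < x) Lw -> all (fun x => 0 < x) Lb ->
  ~~ okd Lw Lb (RTree c [::] [::]).
Proof.
move=> Hw Hb. rewrite /okd.
have -> : white_degrees (RTree c [::] [::]) = if c then [:: 0] else [::] by case: c.
have -> : black_degrees (RTree c [::] [::]) = if c then [::] else [:: 0] by case: c.
case: c.
- apply/negP => /andP [H _]. have := perm_mem H 0. rewrite inE eqxx => /esym E.
  by move: (allP Hw 0); rewrite E => /(_ isT).
- apply/negP => /andP [_ H]. have := perm_mem H 0. rewrite inE eqxx => /esym E.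
  by move: (allP Hb 0); rewrite E => /(_ isT).
Qed.

Lemma psi_phi T : Cp T -> psi (phi T) = T.
Proof.
move=> HC. case: (C_form T HC) => E Hs Hb.
rewrite E phi_mk /psi /=. by rewrite decR_encR.
Qed.

Lemma phi_av T : Cp T -> perm_eq (all_vertices (phi T)) (all_vertices T).
Proof.
move=> HC. case: (C_form T HC) => E Hs Hb.
rewrite E phi_mk. exact: av_perm.
Qed.

Lemma sgt_phi T : Cp T -> sgt (phi T) = sgt T.
Proof.
move=> HC. case: (C_form T HC) => E Hs Hb.
by rewrite E phi_mk sig_phi.
Qed.

Lemma Ap_phi T : Cp T -> Ap (phi T).
Proof. move=> HC. exact: Ap_single. Qed.

Lemma app_cat (s t : seq rtree) : (s ++ t)%list = s ++ t.
Proof. by elim: s => //= a s ->. Qed.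

Lemma ws_bs T : black_side T = ~~ white_side T.
Proof. by rewrite /black_side /white_side; case: (rcol _ _). Qed.

Theorem lemma3p14 (n : nat) (Lw Lb : seq nat) :
  0 < n -> is_partition n Lw -> is_partition n Lb ->
  forall LW LB : seq rtree,
    List.NoDup LW -> (forall T, List.In T LW <-> in_W Lw Lb T) ->
    List.NoDup LB -> (forall T, List.In T LB <-> in_B Lw Lb T) ->
    ((\sum_(T <- LW) omega T) - (\sum_(T <- LB) omega T) = 0)%R.
Proof.
move=> Hn HpW HpB LW LB NW HW NB HB.
have PosW : all (fun x => 0 < x) Lw by case/and3P: HpW.
have PosB : all (fun x => 0 < x) Lb by case/and3P: HpB.
set L := LW ++ LB.
have HL : forall T, List.In T L <-> okd Lw Lb T.
  move=> T. rewrite /L -app_cat List.in_app_iff HW HB /in_W /in_B /okd. split.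
    by case=> [[_ A B]|[_ A B]]; rewrite A B.
  move=> /andP [A B]. case Hs: (white_side T); [left|right]; split => //.
  by rewrite ws_bs Hs.
have NL : List.NoDup L.
  rewrite /L -app_cat. apply: List.NoDup_app => // x /HW [Hw _ _] /HB [Hb _ _].
  by move: Hb; rewrite ws_bs Hw.
have E1 : (\sum_(T <- LW) omega T = \sum_(T <- LW) fT T)%R.
  apply: sum_eq_in => x /HW [Hw _ _]. by rewrite /fT Hw.
have E2 : (\sum_(T <- LB) omega T = - \sum_(T <- LB) fT T)%R.
  rewrite -sumrN. apply: sum_eq_in => x /HB [Hb _ _]. rewrite /fT.
  have -> : white_side x = false by move: Hb; rewrite ws_bs; case: (white_side x).
  by rewrite opprK.
rewrite E1 E2 opprK -big_cat -/L.
under eq_bigr do rewrite f_split.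
rewrite sumrB.
have -> : (\sum_(T <- L) (if Ap T then sgt T else 0) = \sum_(T <- [seq x <- L | Ap x]) sgt T)%R.
  by rewrite big_filter [in RHS]big_mkcond.
have -> : (\sum_(T <- L) (if Cp T then sgt T else 0) = \sum_(T <- [seq x <- L | Cp x]) sgt T)%R.
  by rewrite big_filter [in RHS]big_mkcond.
apply/eqP; rewrite subr_eq0; apply/eqP.
have -> : (\sum_(T <- [seq x <- L | Cp x]) sgt T = \sum_(T <- map phi [seq x <- L | Cp x]) sgt T)%R.
  rewrite big_map. apply: sum_eq_in => x /In_filter [_ Hc]. by rewrite sgt_phi.
apply: sum_perm. apply: Permutation.NoDup_Permutation.
- exact: NoDup_filter.
- apply: FinFun.Injective_map_NoDup_in; last exact: NoDup_filter.
  move=> x y /In_filter [_ Hx] /In_filter [_ Hy] E.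
  by rewrite -(psi_phi x Hx) -(psi_phi y Hy) E.
- move=> x; split.
  + move/In_filter => [Hx HA].
    case: x Hx HA => c F r Hx HA.
    have Hr : r = [::].
      move: HA => /andP [_ /eqP]. rewrite /rsize /rforests /=. by case: r {Hx}.
    subst r.
    case: F Hx HA => [|P Fm] Hx HA.
      by have := okd_nonempty Lw Lb c PosW PosB; rewrite (proj1 (HL _) Hx).
    apply/List.in_map_iff. exists (mkT c Fm (decR P)).
    case: (decR_spec P) => e ne b.
    split; first by rewrite phi_mk e.
    apply/In_filter. split; last exact: Cp_mk.
    apply/HL. rewrite -(okd_perm Lw Lb _ _ (av_perm c Fm (decR P) ne b)) e.
    exact/HL.
  + move/List.in_map_iff => [T [<- /In_filter [HT HC]]].
    apply/In_filter; split; last exact: Ap_phi.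
    apply/HL. rewrite (okd_perm Lw Lb _ _ (phi_av T HC)). exact/HL.
Qed.
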